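(* $\widetilde{\mathbb{K}}_{sm}$ is not an exchange ring, i.e., there exists $r\in\widetilde{\mathbb{K}}_{sm}$ such that $r+e$ is not invertible for every idempotent $e\in\widetilde{\mathbb{K}}_{sm}$.
   Context: Let $I=(0,1]$ and $\mathbb{K}\in\{\mathbb{R},\mathbb{C}\}$. $\mathcal{E}_{M,sm}$ is the set of nets $(r_\varepsilon)_{\varepsilon\in I}\in\mathbb{K}^I$ with $\varepsilon\mapsto r_\varepsilon$ smooth on $I$ and $|r_\varepsilon|=O(\varepsilon^{-N})$ as $\varepsilon\to0$ for some $N\in\mathbb{N}$; $\mathcal{N}_{sm}$ is the set of smooth nets with $|r_\varepsilon|=O(\varepsilon^m)$ for all $m\in\mathbb{N}$; $\widetilde{\mathbb{K}}_{sm}=\mathcal{E}_{M,sm}/\mathcal{N}_{sm}$. A commutative ring $R$ with $1$ is an exchange ring if for each $r\in R$ there is an idempotent $e\in R$ with $r+e$ invertible. *)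

(* Defs.v *)
From Stdlib Require Import Reals.
From Coquelicot Require Import Coquelicot.
Open Scope R_scope.

Inductive Kfield := KR | KC.

(* A net (r_eps)_{eps in I}, I = (0,1], is represented by a function
   R -> C; only its values on I matter for all conditions below.
   For K = R we require the imaginary part to vanish on I. *)
Definition in_I (x : R) : Prop := 0 < x <= 1.

(* Smooth real function on (0, +oo): all iterated derivatives exist there.
   (A smooth net on (0,1] is exactly the restriction of such a function.) *)
Definition smooth_pos (g : R -> R) : Prop :=
  forall (n : nat) (x : R), 0 < x -> ex_derive (Derive_n g n) x.

Definition smooth_net (k : Kfield) (r : R -> C) : Prop :=
  smooth_pos (fun x => Re (r x)) /\ smooth_pos (fun x => Im (r x)) /\
  (k = KR -> forall x, in_I x -> Im (r x) = 0).

Definition moderate (r : R -> C) : Prop :=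
  exists (N : nat) (c eps0 : R), 0 < c /\ in_I eps0 /\
    forall eps, 0 < eps <= eps0 -> Cmod (r eps) <= c / eps ^ N.

Definition negligible (r : R -> C) : Prop :=
  forall m : nat, exists c eps0 : R, 0 < c /\ in_I eps0 /\
    forall eps, 0 < eps <= eps0 -> Cmod (r eps) <= c * eps ^ m.

Definition EMsm (k : Kfield) (r : R -> C) : Prop := smooth_net k r /\ moderate r.
Definition Nsm (k : Kfield) (r : R -> C) : Prop := smooth_net k r /\ negligible r.

Definition nadd (r s : R -> C) : R -> C := fun x => Cplus (r x) (s x).
Definition nmul (r s : R -> C) : R -> C := fun x => Cmult (r x) (s x).
Definition nsub (r s : R -> C) : R -> C := fun x => Cminus (r x) (s x).
Definition none : R -> C := fun _ => RtoC 1.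

(* Equality in the quotient Ktilde_sm = E_{M,sm} / N_sm. *)
Definition Keq (k : Kfield) (r s : R -> C) : Prop := Nsm k (nsub r s).

Definition idempotent (k : Kfield) (e : R -> C) : Prop :=
  EMsm k e /\ Keq k (nmul e e) e.

Definition invertible (k : Kfield) (u : R -> C) : Prop :=
  exists s, EMsm k s /\ Keq k (nmul u s) none.

(* Main.v *)
Require Import Defs.
From Stdlib Require Import Reals Lra.
From Coquelicot Require Import Coquelicot.
Open Scope R_scope.

Lemma claim (z : C) : Cmod (Cminus (Cmult z z) z) <= 1/8 ->
  (Cmod z <= 2 * Cmod (Cminus (Cmult z z) z) /\ Re z <= 1/4) \/
  (Cmod (Cminus z (RtoC 1)) <= 2 * Cmod (Cminus (Cmult z z) z) /\ 3/4 <= Re z).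
Proof.
assert (E : Cminus (Cmult z z) z = Cmult z (Cminus z (RtoC 1))) by ring.
rewrite E, Cmod_mult.
assert (T : Cmod (RtoC 1) <= Cmod z + Cmod (Copp (Cminus z (RtoC 1)))).
{ replace (RtoC 1) with (Cplus z (Copp (Cminus z (RtoC 1)))) at 1 by ring.
  apply Cmod_triangle. }
rewrite Cmod_opp, Cmod_1 in T.
assert (R1 := re_le_Cmod z). assert (R2 := re_le_Cmod (Cminus z (RtoC 1))).
assert (ER : Re (Cminus z (RtoC 1)) = Re z - 1) by (destruct z; simpl; ring).
rewrite ER in R2.
apply Rabs_le_between in R1. apply Rabs_le_between in R2.
assert (P1 := Cmod_ge_0 z). assert (P2 := Cmod_ge_0 (Cminus z (RtoC 1))).
set (A := Cmod z) in *. set (B := Cmod (Cminus z (RtoC 1))) in *.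
intros H.
destruct (Rle_lt_dec (1/2) B).
- left. split; nra.
- right. split; nra.
Qed.

Lemma contra (a s : C) (eps cw cs cu : R) (N : nat) : 0 < eps ->
  Cmod a <= 2 * (cw * eps ^ (S N)) -> Cmod s <= cs / eps ^ N ->
  Cmod (Cminus (Cmult a s) (RtoC 1)) <= cu * eps ^ 1 ->
  (2 * cw * cs + cu) * eps < 1 -> False.
Proof.
intros He Ha Hs Hu Hl.
assert (M : Cmod (Cmult a s) <= 2 * cw * cs * eps).
{ rewrite Cmod_mult.
  apply Rle_trans with ((2 * (cw * eps ^ (S N))) * (cs / eps ^ N)).
  apply Rmult_le_compat; auto using Cmod_ge_0.
  right. simpl. field. apply pow_nonzero; lra. }
assert (T : Cmod (RtoC 1) <= Cmod (Cmult a s) + Cmod (Copp (Cminus (Cmult a s) (RtoC 1)))).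
{ replace (RtoC 1) with (Cplus (Cmult a s) (Copp (Cminus (Cmult a s) (RtoC 1)))) at 1 by ring.
  apply Cmod_triangle. }
rewrite Cmod_opp, Cmod_1 in T. simpl in Hu. lra.
Qed.

Lemma no_jump (f : R -> R) b :
  (forall x, 0 < x <= b -> continuity_pt f x) ->
  (forall x, 0 < x <= b -> f x <= 1/4 \/ 3/4 <= f x) ->
  forall x y, 0 < x <= b -> 0 < y <= b -> f x <= 1/4 -> 3/4 <= f y -> False.
Proof.
intros C D x y Hx Hy Fx Fy.
destruct (Rtotal_order x y) as [Hl|[He|Hl]].
- destruct (Ranalysis5.IVT_interv (fun t => f t - 1/2) x y) as [z [Hz Ez]]; auto.
  + intros a Ha. apply continuity_pt_minus. apply C; lra. apply continuity_pt_const. intros u v; auto.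
  + lra.
  + lra.
  + destruct (D z); lra.
- subst; lra.
- destruct (Ranalysis5.IVT_interv (fun t => 1/2 - f t) y x) as [z [Hz Ez]]; auto.
  + intros a Ha. apply continuity_pt_minus. apply continuity_pt_const. intros u v; auto. apply C; lra.
  + lra.
  + lra.
  + destruct (D z); lra.
Qed.

Lemma pts (v : R) (t0 : R) : sin t0 = v -> 0 < t0 -> forall a, 0 < a ->
  exists eps, 0 < eps <= a /\ sin (/ eps) = v.
Proof.
intros Hs Ht a Ha.
destruct (INR_archimed (2 * PI) (/ a)) as [n Hn]. assert (P := PI_RGT_0). lra.
assert (Hn0 := pos_INR n). assert (P := PI_RGT_0).
set (t := t0 + 2 * INR n * PI).
assert (Htp : / a < t) by (unfold t; nra).
assert (Ht0 : 0 < t) by (apply Rlt_trans with (/a); auto; apply Rinv_0_lt_compat; auto).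
exists (/ t). split. split. apply Rinv_0_lt_compat; auto.
left. rewrite <- (Rinv_inv a). apply Rinv_lt_contravar; auto.
apply Rmult_lt_0_compat; auto. apply Rinv_0_lt_compat; auto.
rewrite Rinv_inv. unfold t. rewrite sin_period. auto.
Qed.
Inductive cls : (R -> R) -> Prop :=
| c_const a : cls (fun _ => a)
| c_inv : cls (fun x => / x)
| c_sin : cls (fun x => sin (/ x))
| c_cos : cls (fun x => cos (/ x))
| c_plus f g : cls f -> cls g -> cls (fun x => f x + g x)
| c_mult f g : cls f -> cls g -> cls (fun x => f x * g x).

Lemma cls_der f : cls f -> exists g, cls g /\ forall x, 0 < x -> is_derive f x (g x).
Proof.
induction 1.
- exists (fun _ => 0); split; [constructor|]. intros x Hx; auto_derive; auto.
- exists (fun x => (-1) * (/x * /x)); split; [repeat constructor|].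
  intros x Hx. auto_derive. lra. field. lra.
- exists (fun x => cos (/x) * ((-1) * (/x * /x))); split; [repeat constructor|].
  intros x Hx. auto_derive. lra. field. lra.
- exists (fun x => sin (/x) * (/x * /x)); split; [repeat constructor|].
  intros x Hx. auto_derive. lra. field. lra.
- destruct IHcls1 as [f' [Hf Df]], IHcls2 as [g' [Hg Dg]].
  exists (fun x => f' x + g' x); split; [constructor; auto|].
  intros x Hx. apply (is_derive_plus f g); auto.
- destruct IHcls1 as [f' [Hf Df]], IHcls2 as [g' [Hg Dg]].
  exists (fun x => f' x * g x + f x * g' x); split; [repeat constructor; auto|].
  intros x Hx. apply (is_derive_mult f g x (f' x) (g' x)); auto.
  intros; apply Rmult_comm.
Qed.

Lemma loc_pos x (P : R -> Prop) : 0 < x -> (forall y, 0 < y -> P y) -> locally x P.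
Proof.
intros Hx H. exists (mkposreal x Hx). intros y Hy. apply H.
unfold ball in Hy; simpl in Hy; unfold AbsRing_ball, abs, minus, plus, opp in Hy; simpl in Hy.
apply Rabs_lt_between' in Hy. lra.
Qed.

Lemma cls_dn f : cls f -> forall n, exists h, cls h /\ forall x, 0 < x -> Derive_n f n x = h x.
Proof.
intros Hf n; induction n as [|n IH].
- exists f; split; auto.
- destruct IH as [h [Hh E]]. destruct (cls_der h Hh) as [h' [Hh' D]].
  exists h'; split; auto. intros x Hx. simpl.
  rewrite (Derive_ext_loc _ h). apply is_derive_unique, D; auto.
  apply loc_pos; auto.
Qed.

Lemma cls_smooth f : cls f -> smooth_pos f.
Proof.
intros Hf n x Hx. destruct (cls_dn f Hf n) as [h [Hh E]].
destruct (cls_der h Hh) as [h' [_ D]].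
apply ex_derive_ext_loc with h. apply loc_pos; auto. intros; symmetry; auto.
exists (h' x). apply D; auto.
Qed.

Definition r0 (x : R) : R := (sin (/ x) + -1) * / 2.

Lemma r0_cls : cls r0.
Proof.
apply (c_mult (fun x => sin (/x) + -1) (fun _ => /2)).
apply (c_plus (fun x => sin (/x)) (fun _ => -1)); constructor. constructor.
Qed.

Lemma cont_of (g : R -> R) x : smooth_pos g -> 0 < x -> continuity_pt g x.
Proof.
intros H Hx. apply continuity_pt_filterlim. apply (ex_derive_continuous g x).
exact (H 0%nat x Hx).
Qed.

Theorem lemma4p3 (k : Kfield) :
  exists r : R -> C, EMsm k r /\
    forall e : R -> C, idempotent k e -> ~ invertible k (nadd r e).
Proof.
exists (fun x => RtoC (r0 x)). split.
{ split. split; [|split].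
  - exact (cls_smooth r0 r0_cls).
  - exact (cls_smooth (fun _ => 0) (c_const 0)).
  - intros; reflexivity.
  - exists 0%nat, 1, 1. split; [lra|split; [unfold in_I; lra|]].
    intros eps He. rewrite Cmod_R. simpl. unfold r0.
    assert (S := SIN_bound (/ eps)). apply Rabs_le. lra. }
intros e [[Hesm _] [_ Hw]] [s [[_ [N [cs [as0 [Hcs [Has Hs]]]]]] [_ Hu]]].
destruct Hesm as [Hre _].
destruct (Hw 1%nat) as [cw1 [aw1 [Hcw1 [Haw1 Hw1]]]].
set (b := Rmin aw1 (/ (8 * cw1))).
assert (Hb : 0 < b).
{ unfold b, in_I in *. apply Rmin_glb_lt. lra. apply Rinv_0_lt_compat; lra. }
assert (Hbw : b <= aw1) by apply Rmin_l.
assert (Hbc : b <= / (8 * cw1)) by apply Rmin_r.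
assert (D : forall x, 0 < x <= b ->
  (Cmod (e x) <= 2 * Cmod (nsub (nmul e e) e x) /\ Re (e x) <= 1/4) \/
  (Cmod (Cminus (e x) (RtoC 1)) <= 2 * Cmod (nsub (nmul e e) e x) /\ 3/4 <= Re (e x))).
{ intros x Hx. apply claim.
  apply Rle_trans with (cw1 * x ^ 1). apply Hw1. lra.
  simpl. apply Rle_trans with (cw1 * / (8 * cw1)).
  apply Rmult_le_compat_l; lra. right; field; lra. }
assert (Cn : forall x, 0 < x <= b -> continuity_pt (fun t => Re (e t)) x).
{ intros x Hx. apply cont_of; auto; lra. }
assert (D' : forall x, 0 < x <= b -> Re (e x) <= 1/4 \/ 3/4 <= Re (e x)).
{ intros x Hx. destruct (D x Hx) as [[_ H]|[_ H]]; auto. }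
destruct (Hw (S N)) as [cw [aw [Hcw [Haw Hwn]]]].
destruct (Hu 1%nat) as [cu [au [Hcu [Hau Hun]]]].
unfold in_I in *.
set (K := 2 * cw * cs + cu).
assert (HK : 0 < K) by (unfold K; nra).
set (a := Rmin (Rmin b as0) (Rmin (Rmin aw au) (/ (2 * K)))).
assert (Ha : 0 < a).
{ unfold a. repeat apply Rmin_glb_lt; try lra. apply Rinv_0_lt_compat; lra. }
assert (Ha1 : a <= b /\ a <= as0 /\ a <= aw /\ a <= au /\ a <= / (2 * K)).
{ unfold a.
  assert (L1 := Rmin_l (Rmin b as0) (Rmin (Rmin aw au) (/ (2 * K)))).
  assert (L2 := Rmin_r (Rmin b as0) (Rmin (Rmin aw au) (/ (2 * K)))).
  assert (L3 := Rmin_l b as0). assert (L4 := Rmin_r b as0).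
  assert (L5 := Rmin_l (Rmin aw au) (/ (2 * K))). assert (L6 := Rmin_r (Rmin aw au) (/ (2 * K))).
  assert (L7 := Rmin_l aw au). assert (L8 := Rmin_r aw au).
  repeat split; lra. }
assert (Fin : forall eps x, 0 < eps <= a ->
   Cmod x <= 2 * Cmod (nsub (nmul e e) e eps) ->
   Cmult (Cplus (RtoC (r0 eps)) (e eps)) (s eps) = Cmult x (s eps) -> False).
{ intros eps x He Hx Ex.
  apply (contra x (s eps) eps cw cs cu N). lra.
  apply Rle_trans with (1 := Hx). apply Rmult_le_compat_l. lra. apply Hwn. lra.
  apply Hs; lra.
  rewrite <- Ex. apply Hun. lra.
  fold K. apply Rle_lt_trans with (K * / (2 * K)).
  apply Rmult_le_compat_l; lra. replace (K * / (2 * K)) with (1/2) by (field; lra). lra. }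
destruct (Rle_lt_dec (Re (e b)) (1/4)) as [Hb0|Hb1].
- destruct (pts 1 (PI/2) sin_PI2 ltac:(assert (P := PI_RGT_0); lra) a Ha) as [eps [He Hsin]].
  assert (Heb : 0 < eps <= b) by lra.
  destruct (D eps Heb) as [[H1 _]|[_ H2]].
  + apply (Fin eps (e eps) He H1).
    unfold r0; rewrite Hsin. replace ((1 + -1) * / 2) with 0 by field. f_equal. ring.
  + exfalso. apply (no_jump _ b Cn D' b eps); lra.
- destruct (pts (-1) (3 * (PI/2)) sin_3PI2 ltac:(assert (P := PI_RGT_0); lra) a Ha) as [eps [He Hsin]].
  assert (Heb : 0 < eps <= b) by lra.
  destruct (D eps Heb) as [[_ H1]|[H2 _]].
  + exfalso. destruct (D' b) as [Q|Q]; [lra|lra|].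
    apply (no_jump _ b Cn D' eps b); lra.
  + apply (Fin eps _ He H2).
    unfold r0; rewrite Hsin. replace ((-1 + -1) * / 2) with (-1) by field. f_equal.
    destruct (e eps) as [p q]. unfold Cminus, Cplus, Copp, RtoC. simpl. f_equal; ring.
Qed.
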